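(* Let $\boldsymbol A,\boldsymbol B$ be $m\times l$ matrices with $\boldsymbol A^\top\boldsymbol A=\boldsymbol B^\top\boldsymbol B=\boldsymbol I_l$, and let $\boldsymbol M$ be an $l\times l$ positive definite matrix whose eigenvalues lie in $[\lambda,\kappa\lambda]$ for some $\lambda>0$, $\kappa\ge1$. If $\boldsymbol A^\top\boldsymbol B$ is a diagonal matrix with non-negative entries, then there is a constant $C$ depending only on $\kappa$ such that $$\|\boldsymbol A\boldsymbol M\boldsymbol A^\top-\boldsymbol B\boldsymbol M\boldsymbol B^\top\|_F\le C\lambda\|\boldsymbol A\boldsymbol A^\top-\boldsymbol B\boldsymbol B^\top\|_F .$$ *)

(* Defs.v *)
From HB Require Import structures.
From mathcomp Require Import all_boot all_order all_algebra.
From mathcomp Require Import reals.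
Set Implicit Arguments. Unset Strict Implicit. Unset Printing Implicit Defensive.
Import Order.TTheory GRing.Theory Num.Theory.
Local Open Scope ring_scope.

Definition frob (R : realType) (m n : nat) (X : 'M[R]_(m, n)) : R :=
  Num.sqrt (\sum_(i < m) \sum_(j < n) X i j ^+ 2).

Definition posdef (R : realType) (n : nat) (M : 'M[R]_n) : Prop :=
  M^T = M /\ forall x : 'cV[R]_n, x != 0 -> 0 < (x^T *m M *m x) 0 0.

(* Main.v *)
Require Import Defs.
From HB Require Import structures.
From mathcomp Require Import all_boot all_order all_algebra.
From mathcomp Require Import reals complex ring lra.
Import Order.TTheory GRing.Theory Num.Theory.
Local Open Scope ring_scope.

Section Helpers.
Local Open Scope sesquilinear_scope.
Lemma row_sq_bound (R : realType) l (M : 'M[R]_l) (mu : R) :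
  M^T = M -> (forall a, eigenvalue M a -> a ^+ 2 <= mu) ->
  forall i, \sum_j M i j ^+ 2 <= mu.
Proof.
move=> Msym Heig i.
pose f := real_complex R.
pose Mc : 'M[R[i]]_l := map_mx f M.
have Mch : Mc \is hermsymmx.
  apply: realsym_hermsym.
    apply/is_hermitianmxP; rewrite expr0 scale1r map_mx_id //.
    by rewrite /Mc map_trmx Msym.
  by apply/mxOverP => j k; rewrite mxE; apply/complex_realP; exists (M j k).
have /orthomx_spectralP Mdec := hermitian_normalmx Mch.
set P := spectralmx Mc in Mdec.
set d := spectral_diag Mc in Mdec.
have Pu : P \is unitarymx by apply: spectral_unitarymx.
have PPt : P *m P^t* = 1%:M by apply/unitarymxP.
have PtP : P^t* *m P = 1%:M by apply: mulmx1C.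
rewrite invmx_unitary // in Mdec.
have dreal := hermitian_spectral_diag_real Mch.
have PM : P *m Mc = diag_mx d *m P.
  by rewrite {1}Mdec !mulmxA PPt mul1mx.
have eigk : forall k, exists r : R, d 0 k = f r /\ r ^+ 2 <= mu.
  move=> k.
  have /complex_realP [r dr] : d 0 k \is Num.real by apply: (mxOverP dreal).
  exists r; split => //; apply: Heig.
  have ev : eigenvalue Mc (d 0 k).
    apply/eigenvalueP; exists (row k P).
      rewrite -row_mul PM mul_diag_mx; apply/rowP => j.
      by rewrite !mxE.
    apply/eqP => rk0.
    have := congr1 (fun v => (v *m P^t*) 0 k) rk0.
    rewrite -row_mul PPt mul0mx !mxE eqxx /=.
    by move/eqP; rewrite oner_eq0.
  move: ev; rewrite dr !eigenvalue_root_char.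
  by rewrite -(fmorph_root f) map_char_poly.
have E : (M *m M) i i = \sum_j M i j ^+ 2.
  rewrite mxE; apply: eq_bigr => j _.
  by have -> : M j i = M i j by rewrite -{1}Msym mxE.
rewrite -E -(lecR (R:=R)).
have key : f ((M *m M) i i) = \sum_k (P^t* i k * d 0 k * d 0 k) * P k i.
  have -> : f ((M *m M) i i) = (Mc *m Mc) i i.
    by rewrite /Mc -map_mxM [RHS]mxE.
  rewrite Mdec !mulmxA -(mulmxA (P^t* *m diag_mx d) P) PPt mulmx1.
  rewrite !mul_mx_diag mxE; apply: eq_bigr => k _; rewrite !mxE.
  by [].
have one : \sum_k (P^t* i k * P k i) = 1.
  have := congr1 (fun X : 'M[R[i]]_l => X i i) PtP; by rewrite !mxE eqxx /=; apply.
change (f ((M *m M) i i) <= f mu).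
rewrite key.
apply: le_trans (_ : \sum_k (P^t* i k * P k i) * f mu <= _); last first.
  by rewrite -mulr_suml one mul1r.
apply: ler_sum => k _.
have [r [dr hr]] := eigk k.
have -> : P^t* i k * d 0 k * d 0 k * P k i = (P^t* i k * P k i) * (d 0 k * d 0 k).
  by rewrite -!mulrA; congr (_ * _); rewrite mulrA mulrC.
apply: ler_wpM2l.
  by rewrite !mxE mulrC; apply: mul_conjC_ge0.
by rewrite dr -rmorphM /= -expr2 lecR.
Qed.
End Helpers.

Lemma sumsq_tr (R : realType) n (X : 'M[R]_n) :
  \sum_i \sum_j X i j ^+ 2 = \tr (X *m X^T).
Proof.
rewrite /mxtrace; apply: eq_bigr => i _; rewrite mxE; apply: eq_bigr => j _.
by rewrite mxE expr2.
Qed.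

Lemma key_expand (R : realType) m l (U V : 'M[R]_(m, l)) (N : 'M[R]_l)
    (dv : 'rV[R]_l) :
  U^T *m U = 1%:M -> V^T *m V = 1%:M -> U^T *m V = diag_mx dv -> N^T = N ->
  \sum_i \sum_j (U *m N *m U^T - V *m N *m V^T) i j ^+ 2
  = 2 * \sum_i \sum_j N i j ^+ 2 * (1 - dv 0 i * dv 0 j).
Proof.
move=> hU hV hD hN.
have hD' : V^T *m U = diag_mx dv.
  by have := congr1 trmx hD; rewrite trmx_mul trmxK tr_diag_mx.
rewrite sumsq_tr.
have hT : forall P : 'M[R]_(m, l), (P *m N *m P^T)^T = P *m N *m P^T.
  by move=> P; rewrite !trmx_mul trmxK hN mulmxA.
rewrite linearB /= !hT.
have T : forall P Q : 'M[R]_(m, l), \tr (P *m N *m P^T *m (Q *m N *m Q^T))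
   = \tr (N *m (P^T *m Q) *m N *m (Q^T *m P)).
  move=> P Q; rewrite -!mulmxA mxtrace_mulC !mulmxA.
  by [].
rewrite mulmxBl !mulmxBr !raddfB /= !T hU hV hD hD' !mulmx1.
have t1 : \tr (N *m N) = \sum_i \sum_j N i j ^+ 2.
  rewrite /mxtrace; apply: eq_bigr => i _; rewrite mxE; apply: eq_bigr => j _.
  by rewrite -{2}hN mxE expr2.
have t2 : \tr (N *m diag_mx dv *m N *m diag_mx dv)
   = \sum_i \sum_j N i j ^+ 2 * (dv 0 i * dv 0 j).
  rewrite /mxtrace; apply: eq_bigr => i _; rewrite mul_mx_diag mxE mxE.
  rewrite mulr_suml; apply: eq_bigr => j _.
  rewrite mul_mx_diag mxE -{2}hN mxE; ring.
rewrite t1 t2.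
have -> : \sum_i \sum_j N i j ^+ 2 * (1 - dv 0 i * dv 0 j)
  = \sum_i \sum_j N i j ^+ 2 - \sum_i \sum_j N i j ^+ 2 * (dv 0 i * dv 0 j).
  rewrite -sumrB; apply: eq_bigr => i _; rewrite -sumrB; apply: eq_bigr => j _.
  ring.
ring.
Qed.

Lemma ineq_main (R : realType) l (N : 'M[R]_l) (dv : 'rV[R]_l) (mu2 : R) :
  N^T = N -> (forall i, 0 <= dv 0 i <= 1) -> (forall i, \sum_j N i j ^+ 2 <= mu2) ->
  \sum_i \sum_j N i j ^+ 2 * (1 - dv 0 i * dv 0 j)
   <= 2 * mu2 * \sum_i (1 - dv 0 i ^+ 2).
Proof.
move=> hN hd hs.
have symN : forall i j, N j i = N i j by move=> i j; rewrite -{1}hN mxE.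
apply: (@le_trans _ _ (\sum_i \sum_j N i j ^+ 2 * ((1 - dv 0 i ^+ 2) + (1 - dv 0 j ^+ 2)))).
  apply: ler_sum => i _; apply: ler_sum => j _.
  apply: ler_wpM2l; first exact: sqr_ge0.
  have := hd i; have := hd j; move=> /andP[a0 a1] /andP[b0 b1].
  case: (lerP (dv 0 i) (dv 0 j)) => h; nra.
have E : \sum_i \sum_j N i j ^+ 2 * ((1 - dv 0 i ^+ 2) + (1 - dv 0 j ^+ 2))
   = 2 * \sum_i (1 - dv 0 i ^+ 2) * (\sum_j N i j ^+ 2).
  rewrite (eq_bigr (fun i => \sum_j N i j ^+ 2 * (1 - dv 0 i ^+ 2)
              + \sum_j N i j ^+ 2 * (1 - dv 0 j ^+ 2))); last first.
    by move=> i _; rewrite -big_split; apply: eq_bigr => j _; rewrite mulrDr.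
  rewrite big_split /= [X in _ + X]exchange_big /=.
  have -> : \sum_j \sum_i N i j ^+ 2 * (1 - dv 0 j ^+ 2)
         = \sum_i (1 - dv 0 i ^+ 2) * (\sum_j N i j ^+ 2).
    apply: eq_bigr => j _; rewrite mulr_sumr; apply: eq_bigr => i _.
    by rewrite symN mulrC.
  have -> : \sum_i \sum_j N i j ^+ 2 * (1 - dv 0 i ^+ 2)
         = \sum_i (1 - dv 0 i ^+ 2) * (\sum_j N i j ^+ 2).
    apply: eq_bigr => i _; rewrite mulr_sumr; apply: eq_bigr => j _.
    by rewrite mulrC.
  ring.
rewrite E -mulrA ler_pM2l // mulr_sumr; apply: ler_sum => i _.
rewrite mulrC; apply: ler_wpM2r; first by have := hd i => /andP[? ?]; nra.
exact: hs.
Qed.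

Lemma fin_ineq (R : realType) (k l s1 t : R) : 0 <= t ->
  s1 <= 2 * (k * l) ^+ 2 * t -> 2 * s1 <= (2 * k * l) ^+ 2 * (2 * t).
Proof.
move=> t0 I.
have -> : (2 * k * l) ^+ 2 * (2 * t) = 8 * ((k * l) ^+ 2 * t) by ring.
rewrite -mulrA in I.
have : 0 <= (k * l) ^+ 2 * t by apply: mulr_ge0 => //; exact: sqr_ge0.
move: I; generalize ((k * l) ^+ 2 * t) => u.
lra.
Qed.

Theorem mainTheorem18 (R : realType) (kappa : R) (hkappa : 1 <= kappa) :
  exists C : R,
    forall (m l : nat) (A B : 'M[R]_(m, l)) (M : 'M[R]_l) (lam : R),
      0 < lam ->
      A^T *m A = 1%:M ->
      B^T *m B = 1%:M ->
      posdef M ->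
      (forall a : R, eigenvalue M a -> lam <= a <= kappa * lam) ->
      is_diag_mx (A^T *m B) ->
      (forall i : 'I_l, 0 <= (A^T *m B) i i) ->
      frob (A *m M *m A^T - B *m M *m B^T)
        <= C * lam * frob (A *m A^T - B *m B^T).
Proof.
exists (2 * kappa).
move=> m l A B M lam hlam hA hB [Msym _] heig hdiag hnn.
have [dv hD] := diag_mxP _ hdiag.
have dvE : forall i, dv 0 i = (A^T *m B) i i by move=> i; rewrite hD mxE eqxx mulr1n.
have hd : forall i, 0 <= dv 0 i <= 1.
  move=> i; rewrite dvE hnn /=.
  have h0 : 0 <= \sum_k (A k i - B k i) ^+ 2 by apply: sumr_ge0 => k _; exact: sqr_ge0.
  have eA : \sum_k A k i ^+ 2 = 1.
    transitivity ((A^T *m A) i i); last by rewrite hA mxE eqxx.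
    by rewrite mxE; apply: eq_bigr => k _; rewrite mxE expr2.
  have eB : \sum_k B k i ^+ 2 = 1.
    transitivity ((B^T *m B) i i); last by rewrite hB mxE eqxx.
    by rewrite mxE; apply: eq_bigr => k _; rewrite mxE expr2.
  have eAB : (A^T *m B) i i = \sum_k A k i * B k i.
    by rewrite mxE; apply: eq_bigr => k _; rewrite mxE.
  have eS : \sum_k (A k i - B k i) ^+ 2
      = \sum_k A k i ^+ 2 + \sum_k B k i ^+ 2 - 2 * \sum_k A k i * B k i.
    rewrite mulr_sumr -big_split -sumrB; apply: eq_bigr => k _ /=; ring.
  move: h0; rewrite eS eA eB -eAB; lra.
have hs : forall i, \sum_j M i j ^+ 2 <= (kappa * lam) ^+ 2.
  apply: row_sq_bound => // a /heig /andP[a1 a2].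
  have : 0 <= a by apply: le_trans a1; apply: ltW.
  nra.
have eX := @key_expand R m l A B M dv hA hB hD Msym.
have e1 : (1%:M : 'M[R]_l)^T = 1%:M by rewrite trmx1.
have eY := @key_expand R m l A B 1%:M dv hA hB hD e1.
rewrite !mulmx1 in eY.
have eY2 : \sum_i \sum_j (1%:M : 'M[R]_l) i j ^+ 2 * (1 - dv 0 i * dv 0 j)
    = \sum_i (1 - dv 0 i ^+ 2).
  apply: eq_bigr => i _; rewrite (bigD1 i) //= big1 ?addr0.
    by rewrite mxE eqxx /= expr1n mul1r expr2.
  by move=> j /negPf hij; rewrite mxE eq_sym hij /= expr0n /= mul0r.
rewrite eY2 in eY.
have I := @ineq_main R l M dv _ Msym hd hs.
have s2 : 0 <= \sum_i (1 - dv 0 i ^+ 2).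
  by apply: sumr_ge0 => i _; have := hd i => /andP[? ?]; nra.
have c0 : 0 <= 2 * kappa * lam.
  by apply: mulr_ge0; [apply: mulr_ge0 => //; lra | exact: ltW].
rewrite /frob -(ger0_norm c0) -sqrtr_sqr -sqrtrM ?sqr_ge0 // ler_sqrt; last first.
  by apply: mulr_ge0; [exact: sqr_ge0 | rewrite eY; lra].
rewrite eX eY.

exact: (@fin_ineq R _ _ _ _ s2 I).
Qed.
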